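(* Let $n\ge1$, $1\le k\le n$, $l\ge1$, $k'=n+1-k$, $d=kk'$, and regard $B=B(l\bar\Lambda_k)$ as the set of semistandard tableaux $(m_{i,i'})_{1\le i\le k,1\le i'\le l}$ with entries in $\{1,\dots,n+1\}$, $m_{i,i'}\le m_{i,i'+1}$, $m_{i,i'}<m_{i+1,i'}$, with its $U_q(A_n)$-crystal structure. For $1\le a\le d$ put $g=\lfloor(a-1)/k'\rfloor$, $r=a-1-k'g$ and $i_a=k-g+r\in\{1,\dots,n\}$. Let $B_0=\{\overline b\}$ where $\overline b$ is the tableau with $m_{i,i'}=i$, $B_a=\bigcup_{n\ge0}\tilde f_{i_a}^nB_{a-1}\setminus\{0\}$, $b_0=\overline b$ and $b_a=\tilde f_{i_a}^{\varphi_{i_a}(b_{a-1})}b_{a-1}$. Then for each $1\le a\le d$: (1) $B_a=\{(m_{i,i'})\in B: m_{i,i'}=i \text{ for all } i<k-g \text{ and all } i',\ m_{k-g,i'}\le k-g+r+1\text{ for all }i'\}$; (2) $b_a$ is the tableau with $m_{i,i'}=i$ for $i<k-g$, $m_{k-g,i'}=k-g+r+1$, and $m_{i,i'}=i+k'$ for $i>k-g$.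
   Context: The crystal structure on $B(l\bar\Lambda_k)$: for a single column ($l=1$), $\tilde e_j$ (resp. $\tilde f_j$) changes an entry $j+1$ to $j$ (resp. $j$ to $j+1$), giving $0$ if there is no such entry or the result is not strictly increasing; for general $l$, $B(l\bar\Lambda_k)$ is embedded in $B(\bar\Lambda_k)^{\otimes l}$ by sending a tableau to (column $l$)$\otimes\cdots\otimes$(column $1$), and the operators are the restrictions of those on the tensor product (Kashiwara's tensor product / signature rule). $\varphi_j(b)=\max\{n:\tilde f_j^nb\neq0\}$. (In the paper these $B_a,b_a$ are the sets $B^{(n+1)}_a$ and elements $b^{(n+1)}_a$ for the perfect crystal $B^{k,l}$ of type $A^{(1)}_n$ at $j=n+1$, where $i^{(n+1)}_a\equiv k-g+r$.) *)

(* Defs.v *)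
From Stdlib Require Import ClassicalEpsilon.
From mathcomp Require Import all_boot all_algebra.
Set Implicit Arguments. Unset Strict Implicit. Unset Printing Implicit Defensive.

(* A column is the sequence of its entries, top to bottom. *)

Definition col_f (j : nat) (c : seq nat) : option (seq nat) :=
  if j \in c then
    let c' := [seq (if x == j then j.+1 else x) | x <- c] in
    if sorted ltn c' then Some c' else None
  else None.

Definition col_e (j : nat) (c : seq nat) : option (seq nat) :=
  if j.+1 \in c then
    let c' := [seq (if x == j.+1 then j else x) | x <- c] in
    if sorted ltn c' then Some c' else None
  else None.

(* phi_j / eps_j of a column: a column admits at most one application of
   f_j (resp. e_j), so phi_j = [f_j c <> 0], eps_j = [e_j c <> 0]. *)
Definition col_phi (j : nat) (c : seq nat) : nat := if col_f j c is Some _ then 1 else 0.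
Definition col_eps (j : nat) (c : seq nat) : nat := if col_e j c is Some _ then 1 else 0.

(* [:: c1; c2; ...; cL] stands for c1 (x) (c2 (x) (... (x) cL)).
   phi(b1(x)b2) = phi(b2) + max(0, phi(b1) - eps(b2)),
   eps(b1(x)b2) = eps(b1) + max(0, eps(b2) - phi(b1)),
   f(b1(x)b2) = f b1 (x) b2 if phi(b1) > eps(b2), b1 (x) f b2 otherwise. *)
Fixpoint teps_aux (j : nat) (cs : seq (seq nat)) : nat :=
  match cs with
  | [::] => 0
  | c :: cs' => col_eps j c + (teps_aux j cs' - col_phi j c)
  end.

Fixpoint tf (j : nat) (cs : seq (seq nat)) : option (seq (seq nat)) :=
  match cs with
  | [::] => None
  | c :: cs' =>
      if col_phi j c > teps_aux j cs' then omap (fun c' => c' :: cs') (col_f j c)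
      else omap (cons c) (tf j cs')
  end.

(* A tableau (m_{i,i'}) with 1<=i<=k, 1<=i'<=l is a matrix 'M[nat]_(k,l);
   0-based row index i stands for the paper's row i+1 (same for columns).
   Entries are the paper's entries (in {1,...,n+1}). *)
Definition is_tab (n k l : nat) (A : 'M[nat]_(k, l)) : bool :=
  [&& [forall i, forall j, (1 <= A i j) && (A i j <= n.+1)],
      [forall i, forall j : 'I_l, forall j' : 'I_l,
         (j'.+1 == j :> nat) ==> (A i j' <= A i j)] &
      [forall i : 'I_k, forall i' : 'I_k, forall j,
         (i'.+1 == i :> nat) ==> (A i' j < A i j)]].

(* Reading: tableau |-> (column l) (x) ... (x) (column 1). *)
Definition cols_of (k l : nat) (A : 'M[nat]_(k, l)) : seq (seq nat) :=
  [seq [seq A i j | i <- enum 'I_k] | j <- rev (enum 'I_l)].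

Definition mx_of_cols (k l : nat) (cs : seq (seq nat)) : 'M[nat]_(k, l) :=
  \matrix_(i < k, j < l) nth 0 (nth [::] cs (l.-1 - j)) i.

Definition tab_f (k l : nat) (j : nat) (A : 'M[nat]_(k, l)) : option 'M[nat]_(k, l) :=
  omap (@mx_of_cols k l) (tf j (cols_of A)).

(* f_j^m (None plays the role of 0). *)
Fixpoint iterf (k l : nat) (j m : nat) (A : 'M[nat]_(k, l)) : option 'M[nat]_(k, l) :=
  match m with
  | 0 => Some A
  | m'.+1 => obind (@tab_f k l j) (iterf j m' A)
  end.

Definition phi_tab (k l : nat) (j : nat) (A : 'M[nat]_(k, l)) : nat :=
  epsilon (inhabits 0%N)
    (fun m => iterf j m A <> None /\ forall m', iterf j m' A <> None -> m' <= m).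

Definition bbar (k l : nat) : 'M[nat]_(k, l) := \matrix_(i < k, j < l) i.+1.

Definition kp (n k : nat) : nat := n.+1 - k.
Definition gidx (n k a : nat) : nat := a.-1 %/ kp n k.
Definition ridx (n k a : nat) : nat := a.-1 - kp n k * gidx n k a.
Definition iidx (n k a : nat) : nat := k - gidx n k a + ridx n k a.

Fixpoint Bset (n k l : nat) (a : nat) (A : 'M[nat]_(k, l)) : Prop :=
  match a with
  | 0 => A = bbar k l
  | a'.+1 => exists (m : nat) (A0 : 'M[nat]_(k, l)),
      Bset n a' A0 /\ iterf (iidx n k a) m A0 = Some A
  end.

(* b_0 = bbar, b_a = f_{i_a}^{phi_{i_a}(b_{a-1})} b_{a-1}.
   (The default in odflt is never used: f^phi b <> 0 by definition of phi.) *)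
Fixpoint bseq_a (n k l : nat) (a : nat) : 'M[nat]_(k, l) :=
  match a with
  | 0 => bbar k l
  | a'.+1 =>
      let b := bseq_a n k l a' in
      let j := iidx n k a in
      odflt b (iterf j (phi_tab j b) b)
  end.

Definition b_expected (n k l a : nat) : 'M[nat]_(k, l) :=
  \matrix_(i < k, j < l)
    (if i.+1 < k - gidx n k a then i.+1
     else if i.+1 == k - gidx n k a then k - gidx n k a + ridx n k a + 1
     else i.+1 + kp n k).

(* Main.v *)
Require Import Defs.
From Stdlib Require Import ClassicalEpsilon.
From mathcomp Require Import all_boot all_algebra.
From mathcomp Require Import zify.
Set Implicit Arguments. Unset Strict Implicit. Unset Printing Implicit Defensive.

Ltac fixsz := repeat (match goal with
 | H : context [@size (Equality.sort ?T) ?s] |- _ => progress change (@size (Equality.sort T) s) with (@size nat s) in H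
 | |- context [@size (Equality.sort ?T) ?s] => progress change (@size (Equality.sort T) s) with (@size nat s)
 | H : context [@nth (Equality.sort ?T) ?x ?s ?i] |- _ => progress change (@nth (Equality.sort T) x s i) with (@nth nat x s i) in H
 | |- context [@nth (Equality.sort ?T) ?x ?s ?i] => progress change (@nth (Equality.sort T) x s i) with (@nth nat x s i)
 end).
Ltac clean := repeat (match goal with H : is_true ?X |- _ =>
  lazymatch X with
  | leq _ _ => fail
  | andb (leq _ _) (leq _ _) => fail
  | @eq_op _ _ _ => fail
  | negb (@eq_op _ _ _) => fail
  | _ => clear H
  end end).
Ltac nlia := fixsz; clean; lia.

Section Col.
Variable j : nat.

Lemma memnP (s : seq nat) x : x \in s -> exists2 i, i < size s & nth 0 s i = x.
Proof. by move/(nthP 0) => [i h e]; exists i. Qed.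

Lemma sl_nth s i i' : sorted ltn s -> i < i' -> i' < size s -> nth 0 s i < nth 0 s i'.
Proof.
move=> ss lt lt'.
have := @sorted_ltn_nth _ ltn ltn_trans 0 s ss i i'.
rewrite !inE => H; apply: H => //; nlia.
Qed.

Lemma sl_nth_le s i i' : sorted ltn s -> i <= i' -> i' < size s -> nth 0 s i <= nth 0 s i'.
Proof.
move=> ss; rewrite leq_eqVlt => /orP[/eqP->//|lt] lt'.
by apply: ltnW; apply: sl_nth.
Qed.

Lemma sl_adj_up s i : sorted ltn s -> i < size s -> nth 0 s i = j -> j.+1 \in s ->
  i.+1 < size s /\ nth 0 s i.+1 = j.+1.
Proof.
move=> ss isz e /memnP [i' i'sz e'].
case: (ltngtP i' i.+1) => h.
- have := @sl_nth_le s i' i ss; move=> H; have := H h isz; rewrite e e'; nlia.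
- have h1 : i.+1 < size s by nlia.
  have := sl_nth ss (ltnSn i) h1.
  have := sl_nth ss h i'sz. nlia.
- by subst i'; split.
Qed.

Lemma sl_adj_down s i : sorted ltn s -> i < size s -> nth 0 s i = j.+1 -> j \in s ->
  0 < i /\ nth 0 s i.-1 = j.
Proof.
move=> ss isz e /memnP [i' i'sz e'].
case: (ltngtP i' i.-1) => h.
- have h1 : i.-1 < size s by nlia.
  have h2 : i.-1 < i by nlia.
  have := sl_nth ss h h1.
  have := sl_nth ss h2 isz. nlia.
- have := @sl_nth_le s i i' ss => H. have := H ltac:(nlia) i'sz. rewrite e e'; nlia.
- subst i'. case: i isz e e' i'sz => [|i] //= isz e e' _. nlia.
Qed.

Definition gm x := if x == j then j.+1 else x.
Definition ge x := if x == j.+1 then j else x.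

Lemma sorted_gm s : sorted ltn s -> j.+1 \notin s -> sorted ltn (map gm s).
Proof.
move=> ss nin; apply/(sortedP 0) => i; rewrite size_map => isz.
rewrite !(nth_map 0) //; last nlia.
have := sl_nth ss (ltnSn i) isz.
have : nth 0 s i.+1 != j.+1 by apply: contra nin => /eqP <-; apply: mem_nth.
move=> /eqP h1 h2; rewrite /gm /=.
case: (nth 0 s i =P j) => e1; case: (nth 0 s i.+1 =P j) => e2; nlia.
Qed.

Lemma sorted_ge s : sorted ltn s -> j \notin s -> sorted ltn (map ge s).
Proof.
move=> ss nin; apply/(sortedP 0) => i; rewrite size_map => isz.
rewrite !(nth_map 0) //; last nlia.
have := sl_nth ss (ltnSn i) isz.
have : nth 0 s i != j by apply: contra nin => /eqP <-; apply: mem_nth; nlia.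
move=> /eqP h1 h2; rewrite /ge /=.
case: (nth 0 s i =P j.+1) => e1; case: (nth 0 s i.+1 =P j.+1) => e2; nlia.
Qed.

Lemma sorted_two s : sorted ltn s -> j \in s -> j.+1 \in s -> ~~ sorted ltn (map gm s).
Proof.
move=> ss /memnP [i isz e] jin.
have [i1 e1] := sl_adj_up ss isz e jin.
apply/negP => /(sortedP 0) H.
have := H i; rewrite size_map !(nth_map 0) // => /(_ i1).
by rewrite /gm e e1 eqxx; case: eqP => //; nlia.
Qed.

Lemma sorted_two' s : sorted ltn s -> j \in s -> j.+1 \in s -> ~~ sorted ltn (map ge s).
Proof.
move=> ss /memnP [i isz e] jin.
have [i1 e1] := sl_adj_up ss isz e jin.
apply/negP => /(sortedP 0) H.
have := H i; rewrite size_map !(nth_map 0) // => /(_ i1).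
by rewrite /ge e e1 eqxx; case: eqP => //; nlia.
Qed.

Lemma gm_notin s : j \notin map gm s.
Proof. apply/mapP => -[x _]; rewrite /gm; case: eqP => h; nlia. Qed.
Lemma ge_notin s : j.+1 \notin map ge s.
Proof. apply/mapP => -[x _]; rewrite /ge; case: eqP => h; nlia. Qed.

Lemma gm_in s : j \in s -> j.+1 \in map gm s.
Proof. by move=> h; apply/mapP; exists j => //; rewrite /gm eqxx. Qed.
Lemma ge_in s : j.+1 \in s -> j \in map ge s.
Proof. by move=> h; apply/mapP; exists j.+1 => //; rewrite /ge eqxx. Qed.

Lemma ge_gm s : j.+1 \notin s -> map ge (map gm s) = s.
Proof.
move=> nin; rewrite -map_comp -[RHS]map_id; apply/eq_in_map => x xin /=.
rewrite /ge /gm; case: (x =P j) => [->|ne]; first by rewrite !eqxx.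
by case: eqP => // e; subst x; rewrite xin in nin.
Qed.

Lemma gm_ge s : j \notin s -> map gm (map ge s) = s.
Proof.
move=> nin; rewrite -map_comp -[RHS]map_id; apply/eq_in_map => x xin /=.
rewrite /ge /gm; case: (x =P j.+1) => [->|ne]; first by rewrite eqxx.
by case: eqP => // e; subst x; rewrite xin in nin.
Qed.

Lemma col_fE c c' : sorted ltn c -> col_f j c = Some c' ->
  [/\ j \in c, j.+1 \notin c & c' = map gm c].
Proof.
rewrite /col_f => ss; case: ifP => // jin; case: ifP => // srt [<-].
split => //; apply/negP => j1; by move: (sorted_two ss jin j1); rewrite /gm srt.
Qed.

Lemma col_eE c c' : sorted ltn c -> col_e j c = Some c' ->
  [/\ j.+1 \in c, j \notin c & c' = map ge c].
Proof.
rewrite /col_e => ss; case: ifP => // jin; case: ifP => // srt [<-].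
split => //; apply/negP => j1; by move: (sorted_two' ss j1 jin); rewrite /ge srt.
Qed.

Lemma col_f_some c : sorted ltn c -> j \in c -> j.+1 \notin c -> col_f j c = Some (map gm c).
Proof. by move=> ss jin nin; rewrite /col_f jin (sorted_gm ss nin). Qed.

Lemma col_e_some c : sorted ltn c -> j.+1 \in c -> j \notin c -> col_e j c = Some (map ge c).
Proof. by move=> ss jin nin; rewrite /col_e jin (sorted_ge ss nin). Qed.

Lemma col_phiE c : sorted ltn c -> col_phi j c = ((j \in c) && (j.+1 \notin c)).
Proof.
move=> ss; rewrite /col_phi; case E: (col_f j c) => [c'|].
  by case: (col_fE ss E) => -> ->.
case: (boolP (j \in c)) => //= jin; case: (boolP (j.+1 \in c)) => //= nin.
by rewrite col_f_some in E.
Qed.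

Lemma col_epsE c : sorted ltn c -> col_eps j c = ((j.+1 \in c) && (j \notin c)).
Proof.
move=> ss; rewrite /col_eps; case E: (col_e j c) => [c'|].
  by case: (col_eE ss E) => -> ->.
case: (boolP (j.+1 \in c)) => //= jin; case: (boolP (j \in c)) => //= nin.
by rewrite col_e_some in E.
Qed.

End Col.
Section Tens.
Variable j : nat.

Lemma phi_le1 c : col_phi j c <= 1.
Proof. by rewrite /col_phi; case: col_f. Qed.
Lemma eps_le1 c : col_eps j c <= 1.
Proof. by rewrite /col_eps; case: col_e. Qed.

Lemma last_ne (T : eqType) (a b : T) (xs : seq T) : xs != [::] -> last a xs = last b xs.
Proof. by case: xs. Qed.

Lemma tf_shape cs cs' : all (sorted ltn) cs -> tf j cs = Some cs' ->
  exists xs c c' ys, [/\ cs = xs ++ c :: ys, cs' = xs ++ c' :: ys, col_f j c = Some c',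
     teps_aux j ys = 0 & (forall x0, xs != [::] -> col_phi j (last x0 xs) = 0)].
Proof.
elim: cs cs' => [|c0 cs0 IH] cs' //= /andP [s0 ss].
case: ifP => hphi.
  case E: (col_f j c0) => [c0'|] //= [<-].
  exists [::], c0, c0', cs0; split => //.
  by have := phi_le1 c0; nlia.
case E: (tf j cs0) => [cs0'|] //= [<-].
have [xs [c [c' [ys [e1 e2 e3 e4 e5]]]]] := IH _ ss E.
exists (c0 :: xs), c, c', ys; split => //; try by rewrite e1 || rewrite e2.
move=> x0 _ /=; case: (eqVneq xs [::]) => [xe|xne]; last first.
  by rewrite (last_ne _ c0 xne); apply: e5.
subst xs; rewrite /=; move: hphi; rewrite e1 /= e4.
have sc : sorted ltn c by move: ss; rewrite e1 /= => /andP[].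
have [_ nin _] := col_fE sc e3.
rewrite (col_epsE j sc) (negbTE nin) /=. by have := phi_le1 c0; nlia.
Qed.

Lemma tf_pre cs : all (sorted ltn) cs -> 0 < teps_aux j cs ->
  exists cs', [/\ tf j cs' = Some cs, teps_aux j cs' = (teps_aux j cs).-1 & all (sorted ltn) cs'].
Proof.
elim: cs => [|b1 b2s IH] //= /andP [s1 ss] hpos.
case: (leqP (teps_aux j b2s) (col_phi j b1)) => h.
  have e1 : col_eps j b1 = 1 by move: hpos h; have := eps_le1 b1; nlia.
  have /andP[jin nin] : (j.+1 \in b1) && (j \notin b1) by move: e1; rewrite (col_epsE j s1); case: (_ && _).
  have sb : sorted ltn (map (ge j) b1) by apply: sorted_ge.
  have jin' : j \in map (ge j) b1 by apply: ge_in.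
  have nin' : j.+1 \notin map (ge j) b1 by apply: ge_notin.
  have p1 : col_phi j b1 = 0 by rewrite (col_phiE j s1) (negbTE nin).
  exists (map (ge j) b1 :: b2s); split => /=.
  - rewrite (col_phiE j sb) jin' (negbTE nin') /= ifT; last by nlia.
    by rewrite col_f_some // gm_ge.
  - by rewrite (col_epsE j sb) (negbTE nin') /= (col_phiE j sb) jin' (negbTE nin') /=; nlia.
  - by rewrite sb.
have hp : 0 < teps_aux j b2s by nlia.
have [b2s' [f2 t2 s2]] := IH ss hp.
exists (b1 :: b2s'); split => /=.
- by rewrite ifF ?f2 //; apply/negbTE; rewrite -leqNgt t2; nlia.
- by rewrite t2; nlia.
- by rewrite s1.
Qed.

Fixpoint tfi (m : nat) (cs : seq (seq nat)) : option (seq (seq nat)) :=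
  match m with 0 => Some cs | m'.+1 => obind (tf j) (tfi m' cs) end.

End Tens.
Lemma path_replace (T : Type) (R : rel T) x0 xs c c' ys :
  path R x0 (xs ++ c :: ys) -> R (last x0 xs) c' ->
  (forall y ys', ys = y :: ys' -> R c' y) -> path R x0 (xs ++ c' :: ys).
Proof.
elim: xs x0 => [|x xs IH] x0 /=.
  move=> /andP [_ p] r h; rewrite r /=; case: ys p h => [|y ys'] //= /andP [_ p] h.
  by rewrite p (h y ys' erefl).
by move=> /andP [r1 p] r h; rewrite r1 /= (IH x p r h).
Qed.

Lemma path_extract (T : Type) (R : rel T) x0 xs c ys :
  path R x0 (xs ++ c :: ys) -> R (last x0 xs) c /\ (forall y ys', ys = y :: ys' -> R c y).
Proof.
elim: xs x0 => [|x xs IH] x0 /=.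
  by move=> /andP [r p]; split => // y ys' e; move: p; rewrite e /= => /andP[].
by move=> /andP [_ p]; apply: IH.
Qed.

Lemma sorted_replace (T : eqType) (R : rel T) xs c c' ys :
  sorted R (xs ++ c :: ys) -> (forall x0, xs != [::] -> R (last x0 xs) c') ->
  (forall y ys', ys = y :: ys' -> R c' y) -> sorted R (xs ++ c' :: ys).
Proof.
case: xs => [|x xs] /= p r h.
  case: ys p h => [|y ys'] //= /andP [_ p] h; by rewrite p (h y ys' erefl).
by apply: path_replace p (r x _) h.
Qed.

Lemma sorted_extract (T : eqType) (R : rel T) xs c ys :
  sorted R (xs ++ c :: ys) -> (forall x0, xs != [::] -> R (last x0 xs) c) /\
    (forall y ys', ys = y :: ys' -> R c y).
Proof.
case: xs => [|x xs] /= p.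
  split => // y ys' e; move: p; rewrite e /= => /andP[] //.
have [r h] := path_extract p; split => // x0 _; exact: r.
Qed.

Section Tab.
Variables n k : nat.

Definition Rle (x y : seq nat) := all (fun i => nth 0 y i <= nth 0 x i) (iota 0 k).
Definition colok (c : seq nat) := [&& size c == k, sorted ltn c & all (fun x => 0 < x <= n.+1) c].
Definition tabok (l : nat) (cs : seq (seq nat)) := [&& size cs == l, all colok cs & sorted Rle cs].

Lemma RleP x y : reflect (forall i, i < k -> nth 0 y i <= nth 0 x i) (Rle x y).
Proof.
apply: (iffP allP) => H i.
  by move=> ik; apply: H; rewrite mem_iota; nlia.
by rewrite mem_iota => h; apply: H; nlia.
Qed.

Lemma mem_last_ne (T : eqType) (x0 : T) xs : xs != [::] -> last x0 xs \in xs.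
Proof. by case: xs => // x xs _; rewrite /= mem_last. Qed.

Variable j : nat.
Hypothesis j1 : 0 < j.
Hypothesis jn : j <= n.

Lemma tf_tabok l cs cs' : tabok l cs -> tf j cs = Some cs' -> tabok l cs'.
Proof.
move=> /and3P [/eqP sz ac sr] E.
have ss : all (sorted ltn) cs by apply: sub_all ac => c /and3P[].
have [xs [c [c' [ys [e1 e2 e3 e4 e5]]]]] := tf_shape ss E.
subst cs cs'.
have okc : colok c by move: ac; rewrite all_cat /= => /and3P[].
have /and3P [/eqP szc sc ec] := okc.
have [jin nin ec'] := col_fE sc e3.
have okc' : colok c'.
  rewrite /colok ec' size_map szc eqxx sorted_gm //=.
  apply/allP => y /mapP [x xin ->]; move/allP: ec => /(_ x xin).
  rewrite /gm; case: eqP => //; nlia.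
apply/and3P; split.
- by rewrite -sz !size_cat.
- by move: ac; rewrite !all_cat /= okc' => /and3P [-> _ ->].
have [r1 r2] := sorted_extract sr.
apply: sorted_replace sr _ _.
  move=> x0 xne; have := r1 x0 xne => /RleP R; apply/RleP => i ik.
  set x := last x0 xs.
  have xin : x \in xs by apply: mem_last_ne.
  have /and3P [/eqP szx sx _] : colok x by move/allP: ac; apply; rewrite mem_cat xin.
  have px : col_phi j x = 0 by apply: e5.
  rewrite ec' (nth_map 0) ?szc //.
  rewrite /gm; case: eqP => [ej|]; last by move=> _; apply: R.
  have := R i ik; rewrite ej leq_eqVlt => /orP [/eqP exj|//].
  have jx : j \in x by rewrite exj mem_nth ?szx.
  have j1x : j.+1 \in x.
    move: px; rewrite (col_phiE j sx) jx /=; by case: (j.+1 \in x).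
  have isx : i < size x by rewrite szx.
  have [i1 e1x] := sl_adj_up sx isx (esym exj) j1x.
  have i1k : i.+1 < k by rewrite -szx.
  have i1c : i.+1 < size c by rewrite szc.
  have := R i.+1 i1k; rewrite e1x.
  have := sl_nth sc (ltnSn i) i1c; rewrite ej.
  move=> h1 h2.
  have : nth 0 c i.+1 = j.+1 by nlia.
  move=> ec1; move: nin; rewrite -ec1 mem_nth //; rewrite szc -szx //.
move=> y ys' ey; have := r2 y ys' ey => /RleP R; apply/RleP => i ik.
rewrite ec' (nth_map 0) ?szc //; have := R i ik; rewrite /gm; case: eqP => h; nlia.
Qed.


Lemma tf_tabok_back l cs cs' : all (sorted ltn) cs -> tabok l cs' -> tf j cs = Some cs' -> tabok l cs.
Proof.
move=> ss /and3P [/eqP sz ac sr] E.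
have [xs [c [c' [ys [e1 e2 e3 e4 e5]]]]] := tf_shape ss E.
subst cs cs'.
have sc : sorted ltn c by move: ss; rewrite all_cat /= => /and3P[].
have okc' : colok c' by move: ac; rewrite all_cat /= => /and3P[].
have /and3P [/eqP szc' sc' ec'] := okc'.
have [jin nin ecc] := col_fE sc e3.
have szc : size c = k by rewrite -szc' ecc size_map.
have okc : colok c.
  rewrite /colok szc eqxx sc /=.
  have -> : c = map (ge j) c' by rewrite ecc ge_gm.
  apply/allP => y /mapP [x xin ->]; move/allP: ec' => /(_ x xin).
  rewrite /ge; case: eqP => //; nlia.
apply/and3P; split.
- by rewrite -sz !size_cat.
- by move: ac; rewrite !all_cat /= okc => /and3P [-> _ ->].
have [r1 r2] := sorted_extract sr.
apply: sorted_replace sr _ _.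
  move=> x0 xne; have := r1 x0 xne => /RleP R; apply/RleP => i ik.
  have := R i ik; rewrite ecc (nth_map 0) ?szc // /gm; case: eqP => h; nlia.
move=> y ys' ey; have := r2 y ys' ey => /RleP R; apply/RleP => i ik.
have yin : y \in xs ++ c' :: ys by rewrite mem_cat ey !inE eqxx !orbT.
have /and3P [/eqP szy sy _] : colok y by move/allP: ac; apply.
have ey0 : col_eps j y = 0.
  by move: e4; rewrite ey /=; nlia.
have := R i ik; rewrite ecc (nth_map 0) ?szc // /gm; case: eqP => h; last by nlia.
rewrite leq_eqVlt => /orP [/eqP eyj|]; last by nlia.
have j1y : j.+1 \in y by rewrite -eyj mem_nth ?szy.
have jy : j \in y.
  move: ey0; rewrite (col_epsE j sy) j1y /=; by case: (j \in y).
have isy : i < size y by rewrite szy.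
have [i0 eyd] := sl_adj_down sy isy eyj jy.
have idk : i.-1 < k by nlia.
have := R i.-1 idk; rewrite eyd.
have icd : i < size c by rewrite szc.
have icd' : i < size c' by rewrite szc'.
have ii : i.-1 < i by nlia.
have := sl_nth sc' ii icd'.
have icd1 : i.-1 < size c by nlia.
rewrite ecc !(nth_map 0) //.
rewrite /gm h eqxx.
case: (nth 0 c i.-1 =P j) => h2; first by move=> *; nlia.
move=> h3 h4. have hc : nth 0 c i.-1 = j by nlia. by [].
Qed.

Definition Rel (x y : nat) := (y == x) || ((x == j) && (y == j.+1)).

Lemma Rel_refl x : Rel x x.
Proof. by rewrite /Rel eqxx. Qed.

Lemma Rel_trans x y z : Rel x y -> Rel y z -> Rel x z.
Proof. rewrite /Rel => /orP[/eqP->|/andP[/eqP-> /eqP->]] // /orP[/eqP->|/andP[/eqP h /eqP->]]; nlia. Qed.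

Lemma tf_Rel cs cs' : all (sorted ltn) cs -> tf j cs = Some cs' ->
  forall t i, Rel (nth 0 (nth [::] cs t) i) (nth 0 (nth [::] cs' t) i).
Proof.
move=> ss E t i.
have [xs [c [c' [ys [e1 e2 e3 e4 e5]]]]] := tf_shape ss E.
have sc : sorted ltn c by move: ss; rewrite e1 all_cat /= => /and3P[].
have [_ _ ecc] := col_fE sc e3.
subst cs cs'; rewrite !nth_cat; case: ifP => _; first exact: Rel_refl.
case: (t - size xs) => [|t'] /=; last exact: Rel_refl.
rewrite ecc; case: (ltnP i (size c)) => h.
  by rewrite (nth_map 0) // /Rel /gm; case: (nth 0 c i =P j) => [->|_]; rewrite ?eqxx ?orbT.
by rewrite !nth_default ?size_map // Rel_refl.
Qed.

Lemma tfi_tabok l m cs cs' : tabok l cs -> tfi j m cs = Some cs' -> tabok l cs'.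
Proof.
elim: m cs' => [|m IH] cs' ok /=; first by case=> <-.
case E: (tfi j m cs) => [cs1|] //= E2.
exact: tf_tabok (IH _ ok E) E2.
Qed.

Lemma tfi_Rel l m cs cs' : tabok l cs -> tfi j m cs = Some cs' ->
  forall t i, Rel (nth 0 (nth [::] cs t) i) (nth 0 (nth [::] cs' t) i).
Proof.
elim: m cs' => [|m IH] cs' ok /=; first by case=> <- *; exact: Rel_refl.
case E: (tfi j m cs) => [cs1|] //= E2 t i.
have ok1 := tfi_tabok ok E.
have ss1 : all (sorted ltn) cs1 by move/and3P: ok1 => [_ ac _]; apply: sub_all ac => c /and3P[].
exact: Rel_trans (IH _ ok E t i) (tf_Rel ss1 E2 t i).
Qed.

Lemma pre_iter l cs : tabok l cs ->
  exists cs0, [/\ tabok l cs0, teps_aux j cs0 = 0 & tfi j (teps_aux j cs) cs0 = Some cs].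
Proof.
move e : (teps_aux j cs) => m; elim: m cs e => [|m IH] cs e ok.
  by exists cs.
have ss : all (sorted ltn) cs by move/and3P: ok => [_ ac _]; apply: sub_all ac => c /and3P[].
have hp : 0 < teps_aux j cs by rewrite e.
have [cs1 [f1 t1 s1]] := tf_pre ss hp.
have ok1 := tf_tabok_back s1 ok f1.
have hm : teps_aux j cs1 = m by rewrite t1 e.
have [cs0 [ok0 t0 i0]] := IH cs1 hm ok1.
by exists cs0; split => //=; rewrite i0.
Qed.

End Tab.
Section Bridge.
Variables n k l : nat.

Lemma size_cols (A : 'M[nat]_(k, l)) : size (cols_of A) = l.
Proof. by rewrite size_map size_rev size_enum_ord. Qed.

Lemma nth_cols (A : 'M[nat]_(k, l)) (jj : 'I_l) :
  nth [::] (cols_of A) (l.-1 - jj) = [seq A i jj | i <- enum 'I_k].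
Proof.
have jl : l.-1 - jj < size (rev (enum 'I_l)) by rewrite size_rev size_enum_ord; have := ltn_ord jj; nlia.
rewrite (nth_map jj) // nth_rev; last by move: jl; rewrite size_rev.
apply: eq_map => i; congr (A i _); apply: val_inj => /=.
rewrite size_enum_ord nth_enum_ord; have := ltn_ord jj; nlia.
Qed.

Lemma nth_col (A : 'M[nat]_(k, l)) (jj : 'I_l) (i : 'I_k) :
  nth 0 [seq A i jj | i <- enum 'I_k] i = A i jj.
Proof. by rewrite (nth_map i) ?size_enum_ord // nth_ord_enum. Qed.

Lemma colsE (A : 'M[nat]_(k, l)) (i : 'I_k) (jj : 'I_l) :
  nth 0 (nth [::] (cols_of A) (l.-1 - jj)) i = A i jj.
Proof. by rewrite nth_cols nth_col. Qed.

Lemma t_ord t : t < l -> exists jj : 'I_l, t = l.-1 - jj.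
Proof. move=> tl; have h : l.-1 - t < l by nlia. by exists (Ordinal h) => /=; nlia. Qed.

Lemma mx_cols (A : 'M[nat]_(k, l)) : mx_of_cols k l (cols_of A) = A.
Proof. by apply/matrixP => i jj; rewrite mxE colsE. Qed.

Lemma mx_ofE (cs : seq (seq nat)) (i : 'I_k) (jj : 'I_l) :
  mx_of_cols k l cs i jj = nth 0 (nth [::] cs (l.-1 - jj)) i.
Proof. by rewrite mxE. Qed.

Lemma cols_mx (cs : seq (seq nat)) : size cs = l -> all (fun c => size c == k) cs ->
  cols_of (mx_of_cols k l cs) = cs.
Proof.
move=> sz ac; apply: (eq_from_nth (x0 := [::])); first by rewrite size_cols.
move=> t; rewrite size_cols => tl; have [jj ->] := t_ord tl.
rewrite nth_cols.
have szc : size (nth [::] cs (l.-1 - jj)) = k.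
  by apply/eqP; move/allP: ac; apply; apply: mem_nth; rewrite sz; have := ltn_ord jj; nlia.
apply: (eq_from_nth (x0 := 0)); first by rewrite size_map size_enum_ord.
move=> i; rewrite size_map size_enum_ord => ik.
by rewrite (nth_col _ _ (Ordinal ik)) mx_ofE.
Qed.

Lemma is_tabP (A : 'M[nat]_(k, l)) : is_tab n A <-> tabok n k l (cols_of A).
Proof.
rewrite /is_tab /tabok size_cols eqxx /=; split.
  move=> /and3P [/forallP H1 /forallP H2 /forallP H3]; apply/andP; split.
    apply/allP => c /mapP [jj _ ->]; apply/and3P; split.
    - by rewrite size_map size_enum_ord.
    - apply/(sortedP 0) => i; rewrite size_map size_enum_ord => ik.
      have ik' : i < k by nlia.
      rewrite (nth_col _ _ (Ordinal ik)) (nth_col _ _ (Ordinal ik')).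
      by move/forallP: (H3 (Ordinal ik)) => /(_ (Ordinal ik')) /forallP /(_ jj) /implyP; apply.
    - apply/allP => x /mapP [i _ ->].
      by move/forallP: (H1 i) => /(_ jj).
  apply/(sortedP [::]) => t; rewrite size_cols => tl.
  have tl' : t < l by nlia.
  have [jj ejj] := t_ord tl; have [jj' ejj'] := t_ord tl'.
  rewrite ejj ejj'; apply/allP => i; rewrite mem_iota add0n => /andP [_ ik].
  rewrite !nth_cols (nth_col _ _ (Ordinal ik)) (nth_col _ _ (Ordinal ik)).
  move/forallP: (H2 (Ordinal ik)) => /(_ jj') /forallP /(_ jj) /implyP; apply.
  apply/eqP; have := ltn_ord jj; have := ltn_ord jj'; nlia.
move=> /andP [/allP ac /(sortedP [::]) sr].
have colin : forall jj : 'I_l, colok n k (nth [::] (cols_of A) (l.-1 - jj)).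
  move=> jj; apply: ac; apply: mem_nth; rewrite size_cols; have := ltn_ord jj; nlia.
apply/and3P; split.
- apply/forallP => i; apply/forallP => jj.
  have /and3P [/eqP szc _ /allP H] := colin jj.
  rewrite -colsE; apply: H; apply: mem_nth; rewrite szc; exact: ltn_ord.
- apply/forallP => i; apply/forallP => jj; apply/forallP => jj'; apply/implyP => /eqP e.
  have tl : (l.-1 - jj).+1 < size (cols_of A).
    rewrite size_cols; have := ltn_ord jj; have := ltn_ord jj'; nlia.
  have := sr _ tl => /RleP /(_ i (ltn_ord i)).
  have -> : (l.-1 - jj).+1 = l.-1 - jj' by have := ltn_ord jj; nlia.
  by rewrite !colsE.
- apply/forallP => i; apply/forallP => i'; apply/forallP => jj; apply/implyP => /eqP e.
  have /and3P [/eqP szc /(sortedP 0) H _] := colin jj.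
  have ik : i'.+1 < size (nth [::] (cols_of A) (l.-1 - jj)) by rewrite szc e.
  by move: (H _ ik); rewrite e -!colsE.
Qed.

End Bridge.
Definition Pset (n k l p u : nat) (A : 'M[nat]_(k, l)) : Prop :=
  [/\ is_tab n A, (forall (i : 'I_k) (jj : 'I_l), i.+1 < p -> A i jj = i.+1) &
      (forall (i : 'I_k) (jj : 'I_l), i.+1 = p -> A i jj <= u)].

Lemma Rle_refl k : reflexive (Rle k).
Proof. by move=> x; apply/RleP. Qed.
Lemma Rle_trans k : transitive (Rle k).
Proof.
move=> y x z /RleP h1 /RleP h2; apply/RleP => i ik.
exact: leq_trans (h2 i ik) (h1 i ik).
Qed.

Section Step.
Variables n k l p j : nat.
Hypothesis l1 : 0 < l.
Hypothesis p1 : 0 < p.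
Hypothesis pk : p <= k.
Hypothesis pj : p <= j.
Hypothesis jn : j <= n.

Lemma j1 : 0 < j. Proof. nlia. Qed.

Lemma iterf_tfi m cs : tabok n k l cs ->
  iterf j m (mx_of_cols k l cs) = omap (mx_of_cols k l) (tfi j m cs).
Proof.
move=> ok; elim: m => [|m IH] //=.
rewrite IH; case E: (tfi j m cs) => [cs1|] //=.
have ok1 := tfi_tabok j1 jn ok E.
move/and3P: (ok1) => [/eqP sz ac _].
rewrite /tab_f cols_mx //; apply: sub_all ac => c /and3P[] //.
Qed.

Lemma tabok_mx cs : tabok n k l cs -> is_tab n (mx_of_cols k l cs).
Proof.
move=> ok; apply/is_tabP; move/and3P: (ok) => [/eqP sz ac _].
rewrite cols_mx //; apply: sub_all ac => c /and3P[] //.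
Qed.

Lemma Rel_mx m cs cs' : tabok n k l cs -> tfi j m cs = Some cs' ->
  forall i jj, Rel j (mx_of_cols k l cs i jj) (mx_of_cols k l cs' i jj).
Proof. by move=> ok E i jj; rewrite !mx_ofE; apply: (tfi_Rel j1 jn ok E). Qed.

Lemma RelE x y : Rel j x y -> y = x \/ (x = j /\ y = j.+1).
Proof. by rewrite /Rel => /orP [/eqP ->|/andP [/eqP -> /eqP ->]]; [left|right]. Qed.

Lemma step_fwd (A0 : 'M[nat]_(k, l)) m (A : 'M[nat]_(k, l)) : Pset n p j A0 -> iterf j m A0 = Some A -> Pset n p j.+1 A.
Proof.
move=> [t0 r0 q0] E.
have ok := proj1 (is_tabP n A0) t0.
move: E; rewrite -(mx_cols A0) iterf_tfi //.
case E: (tfi j m (cols_of A0)) => [cs'|] //= [<-].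
have ok' := tfi_tabok j1 jn ok E.
have R := Rel_mx ok E; rewrite mx_cols in R.
split; first exact: tabok_mx.
  move=> i jj h; have [->|[e _]] := RelE (R i jj); first exact: r0.
  by move: (r0 i jj h); nlia.
move=> i jj h; have [->|[e ->]] := RelE (R i jj) => //.
by move: (q0 i jj h); nlia.
Qed.

Lemma step_bwd (A : 'M[nat]_(k, l)) : Pset n p j.+1 A -> exists m A0, Pset n p j A0 /\ iterf j m A0 = Some A.
Proof.
move=> [t r q].
have ok := proj1 (is_tabP n A) t.
have [cs0 [ok0 te0 it0]] := pre_iter j1 jn ok.
exists (teps_aux j (cols_of A)), (mx_of_cols k l cs0).
have R := Rel_mx ok0 it0; rewrite mx_cols in R.
have rows : forall (i : 'I_k) (jj : 'I_l), i.+1 < p -> mx_of_cols k l cs0 i jj = i.+1.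
  move=> i jj h; have [e|[e1 e2]] := RelE (R i jj); first by rewrite -e r.
  by move: (r i jj h); nlia.
split; last by rewrite iterf_tfi // it0 /= mx_cols.
split => //; first exact: tabok_mx.
move=> i jj h.
have le1 : mx_of_cols k l cs0 i jj <= j.+1.
  have [e|[e1 e2]] := RelE (R i jj); first by rewrite -e q.
  by rewrite e1.
rewrite leq_eqVlt in le1; case/orP: le1 => [/eqP e|]; last by nlia.
exfalso.
move/and3P: (ok0) => [/eqP sz0 ac0 sr0].
case: cs0 sz0 ac0 sr0 te0 ok0 it0 R rows e => [|c0 cs1].
  by move=> /= sz0; exfalso; move: l1; rewrite -sz0.
move=> /= sz0 /andP [okc0 _] sr0 te0 ok0 it0 R rows e.
have /and3P [/eqP szc sc _] := okc0.
have jmaxl : l.-1 < l by nlia.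
set jmax := Ordinal jmaxl.
have E0 : forall i' : 'I_k, nth 0 c0 i' = mx_of_cols k l (c0 :: cs1) i' jmax.
  by move=> i'; rewrite mx_ofE /= subnn.
have cmax : nth 0 c0 i = j.+1.
  have : mx_of_cols k l (c0 :: cs1) i jj <= mx_of_cols k l (c0 :: cs1) i jmax.
    rewrite !mx_ofE /= subnn.
    have hs := @sorted_leq_nth _ (Rle k) (@Rle_trans k) (@Rle_refl k) [::] (c0 :: cs1) sr0 0 (l.-1 - jj).
    have : Rle k (nth [::] (c0 :: cs1) 0) (nth [::] (c0 :: cs1) (l.-1 - jj)).
      apply: hs; rewrite ?inE /=; move: sz0 (ltn_ord jj); nlia.
    by move/RleP => /(_ i (ltn_ord i)).
  have : mx_of_cols k l (c0 :: cs1) i jmax <= j.+1.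
    have [e'|[e1 e2]] := RelE (R i jmax); first by rewrite -e' q.
    by rewrite e1.
  rewrite -E0; nlia.
have j1c : j.+1 \in c0 by rewrite -cmax mem_nth ?szc.
have jc : j \in c0.
  move: te0; rewrite (col_epsE j sc) j1c /=; case: (j \in c0) => //=.
have [i2 i2k e2] := memnP jc.
rewrite szc in i2k.
case: (ltngtP i2 i) => h2.
- have := rows (Ordinal i2k) jmax; rewrite -E0 /= e2 => H; move: (H ltac:(nlia)); nlia.
- have := sl_nth sc h2 (_ : i2 < size c0); rewrite ?szc // e2 cmax; nlia.
- by move: e2; rewrite h2 cmax; nlia.
Qed.

End Step.
Definition efun (n k p u : nat) (i : nat) :=
  if i.+1 < p then i.+1 else if i.+1 == p then u else i.+1 + kp n k.

Definition Emx (n k l p u : nat) : 'M[nat]_(k, l) := \matrix_(i < k, jj < l) efun n k p u i.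

Definition ecol n k p u := [seq efun n k p u i | i <- iota 0 k].

Lemma size_ecol n k p u : size (ecol n k p u) = k.
Proof. by rewrite size_map size_iota. Qed.

Lemma nth_ecol n k p u i : i < k -> nth 0 (ecol n k p u) i = efun n k p u i.
Proof. by move=> ik; rewrite (nth_map 0) ?size_iota // nth_iota. Qed.

Lemma cols_Emx n k l p u : cols_of (Emx n k l p u) = nseq l (ecol n k p u).
Proof.
apply: (eq_from_nth (x0 := [::])); first by rewrite size_cols size_nseq.
move=> t; rewrite size_cols => tl; have [jj ejj] := t_ord tl.
rewrite nth_nseq tl ejj nth_cols /ecol -val_enum_ord -map_comp.
by apply: eq_map => i /=; rewrite mxE.
Qed.

Lemma Emx_cols n k l p u : mx_of_cols k l (nseq l (ecol n k p u)) = Emx n k l p u.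
Proof. by rewrite -cols_Emx mx_cols. Qed.

Section TfN.
Variable j : nat.
Variables c c' : seq nat.
Hypothesis fc : col_f j c = Some c'.
Hypothesis pc : col_phi j c = 1.
Hypothesis ec : col_eps j c = 0.
Hypothesis pc' : col_phi j c' = 0.

Lemma teps_nseq t : teps_aux j (nseq t c) = 0.
Proof. by elim: t => //= t ->; rewrite ec. Qed.

Lemma tf_nseq' t : tf j (nseq t c') = None.
Proof. by elim: t => //= t ->; rewrite pc' /=. Qed.

Lemma tf_nseq m t : tf j (nseq m c' ++ nseq t.+1 c) = Some (nseq m.+1 c' ++ nseq t c).
Proof.
elim: m => [|m IH] /=; first by rewrite pc teps_nseq fc.
by rewrite pc' /= IH.
Qed.
End TfN.

Lemma iterf_none k l j m m' (B : 'M[nat]_(k, l)) : m <= m' -> iterf j m B = None -> iterf j m' B = None.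
Proof.
move=> h; elim: m' h => [|m' IH]; first by rewrite leqn0 => /eqP ->.
rewrite leq_eqVlt => /orP [/eqP ->//|h] E /=; by rewrite IH.
Qed.

Section S2.
Variables n k l p j : nat.
Hypothesis l1 : 0 < l.
Hypothesis p1 : 0 < p.
Hypothesis pk : p <= k.
Hypothesis pj : p <= j.
Hypothesis jn : j <= n.
Hypothesis jp : j < p + (n.+1 - k).

Let c := ecol n k p j.
Let c' := ecol n k p j.+1.

Lemma gm_c : map (gm j) c = c'.
Proof.
rewrite /c /c' /ecol -map_comp; apply: eq_map => i /=.
rewrite /gm /efun /kp; case: (ltnP i.+1 p) => h1; first by case: eqP => // h; nlia.
case: (i.+1 =P p) => h2; first by rewrite eqxx.
by case: eqP => h3 //; nlia.
Qed.

Lemma efun_homo u : p <= u -> u < p + (n.+1 - k) + 1 -> {homo efun n k p u : x y / x < y}.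
Proof.
move=> h1 h2 x y xy; rewrite /efun /kp.
case: (ltnP x.+1 p) => a1; case: (ltnP y.+1 p) => b1;
  case: (x.+1 =P p) => a2; case: (y.+1 =P p) => b2; nlia.
Qed.

Lemma sorted_c' : sorted ltn c'.
Proof.
rewrite /c' /ecol; apply: (homo_sorted (efun_homo _ _)); try nlia.
exact: iota_ltn_sorted.
Qed.

Lemma jin_c : j \in c.
Proof.
have pk' : p.-1 < k by nlia.
have e : nth 0 c p.-1 = j by rewrite /c nth_ecol // /efun prednK // ltnn eqxx.
by rewrite -e mem_nth // /c size_ecol.
Qed.

Lemma j1nin_c : j.+1 \notin c.
Proof.
apply/mapP => -[i]; rewrite mem_iota => /andP [_ ik]; rewrite /efun /kp.
case: (ltnP i.+1 p) => a1; first nlia.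
case: eqP => a2; nlia.
Qed.

Lemma jnin_c' : j \notin c'.
Proof.
apply/mapP => -[i]; rewrite mem_iota => /andP [_ ik]; rewrite /efun /kp.
case: (ltnP i.+1 p) => a1; first nlia.
case: eqP => a2; nlia.
Qed.

Lemma fc : col_f j c = Some c'.
Proof. by rewrite /col_f jin_c -[X in sorted _ X]/(map (gm j) c) gm_c sorted_c' -gm_c. Qed.

Lemma pc : col_phi j c = 1.
Proof. by rewrite /col_phi fc. Qed.

Lemma ec : col_eps j c = 0.
Proof. by rewrite /col_eps /col_e (negbTE j1nin_c). Qed.

Lemma pc' : col_phi j c' = 0.
Proof. by rewrite /col_phi /col_f (negbTE jnin_c'). Qed.

Let B := Emx n k l p j.

Lemma sizes m t : size (nseq m c' ++ nseq t c) = m + t /\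
   all (fun x => size x == k) (nseq m c' ++ nseq t c).
Proof.
rewrite size_cat !size_nseq; split => //.
by rewrite all_cat !all_nseq /c /c' !size_ecol eqxx !orbT.
Qed.

Lemma iterf_B m : m <= l -> iterf j m B = Some (mx_of_cols k l (nseq m c' ++ nseq (l - m) c)).
Proof.
elim: m => [|m IH] h /=.
  by rewrite subn0 /B -Emx_cols.
rewrite IH; last by nlia.
rewrite /= /tab_f.
have [s1 s2] := sizes m (l - m).
rewrite cols_mx //; last by rewrite s1; nlia.
have -> : l - m = (l - m.+1).+1 by nlia.
by rewrite (tf_nseq fc pc ec pc').
Qed.

Lemma iterf_B_none : iterf j l.+1 B = None.
Proof.
rewrite /= iterf_B // subnn cats0 /= /tab_f.
have [s1 s2] := sizes l 0; rewrite cats0 in s1 s2.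
rewrite cols_mx //; last by rewrite s1 addn0.
by rewrite (tf_nseq' pc').
Qed.

Lemma phi_B : phi_tab j B = l.
Proof.
set Q := fun m => iterf j m B <> None /\ forall m', iterf j m' B <> None -> m' <= m.
have Ql : Q l.
  split; first by rewrite iterf_B.
  move=> m' h; rewrite leqNgt; apply/negP => h'; apply: h.
  exact: iterf_none h' iterf_B_none.
have := epsilon_spec (inhabits 0) Q (ex_intro _ l Ql).
rewrite -/(phi_tab j B) => -[h1 h2].
apply/eqP; rewrite eqn_leq; apply/andP; split.
  by apply: (proj2 Ql).
by apply: h2; apply: (proj1 Ql).
Qed.

Lemma step_b : odflt B (iterf j (phi_tab j B) B) = Emx n k l p j.+1.
Proof.
rewrite phi_B iterf_B // subnn cats0 /=.
by rewrite /c' Emx_cols.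
Qed.

End S2.
Lemma sl_nth_add s i d : sorted ltn s -> i + d < size s -> nth 0 s i + d <= nth 0 s (i + d).
Proof.
move=> ss; elim: d => [|d IH] h; first by rewrite !addn0.
have h1 : i + d < size s by nlia.
have := sl_nth ss (_ : i + d < i + d.+1) h; rewrite addnS ltnSn => /(_ isT).
move: (IH h1); nlia.
Qed.

Section Bounds.
Variables n k l : nat.

Lemma tab_col (A : 'M[nat]_(k, l)) (jj : 'I_l) : is_tab n A ->
  colok n k (nth [::] (cols_of A) (l.-1 - jj)).
Proof.
move=> /(is_tabP n) /and3P [_ /allP ac _]; apply: ac; apply: mem_nth.
by rewrite size_cols; have := ltn_ord jj; nlia.
Qed.

Lemma tab_lower (A : 'M[nat]_(k, l)) (i : 'I_k) (jj : 'I_l) : is_tab n A -> i.+1 <= A i jj.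
Proof.
move=> t; have /and3P [/eqP szc sc /allP ec] := tab_col jj t.
set s := nth [::] (cols_of A) (l.-1 - jj) in szc sc ec.
have h : 0 + i < size s by rewrite szc add0n.
have := sl_nth_add sc h; rewrite add0n -/s colsE.
have s0 : 0 < size s by nlia.
have := ec _ (mem_nth 0 s0) => /andP [e0 _].
nlia.
Qed.

Lemma tab_upper (A : 'M[nat]_(k, l)) (i : 'I_k) (jj : 'I_l) : is_tab n A -> A i jj + (k - i.+1) <= n.+1.
Proof.
move=> t; have /and3P [/eqP szc sc /allP ec] := tab_col jj t.
set s := nth [::] (cols_of A) (l.-1 - jj) in szc sc ec.
have h : i + (k - i.+1) < size s by rewrite szc; have := ltn_ord i; nlia.
have := sl_nth_add sc h; rewrite -/s colsE.
have : nth 0 s (i + (k - i.+1)) <= n.+1.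
  by move: (ec _ (mem_nth 0 h)) => /andP[].
nlia.
Qed.

Lemma is_tab_bbar : k <= n.+1 -> is_tab n (bbar k l).
Proof.
move=> kn; apply/and3P; split.
- apply/forallP => i; apply/forallP => jj; rewrite mxE; have := ltn_ord i; nlia.
- apply/forallP => i; apply/forallP => jj; apply/forallP => jj'; apply/implyP => _.
  by rewrite !mxE.
- apply/forallP => i; apply/forallP => i'; apply/forallP => jj; apply/implyP => /eqP e.
  by rewrite !mxE; nlia.
Qed.

Lemma bbar_P (A : 'M[nat]_(k, l)) : 0 < k -> k <= n -> (A = bbar k l <-> Pset n k k A).
Proof.
move=> k1 kn; split.
  move=> ->; split; first by apply: is_tab_bbar; nlia.
  - by move=> i jj _; rewrite mxE.
  - by move=> i jj h; rewrite mxE; nlia.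
move=> [t r q]; apply/matrixP => i jj; rewrite mxE.
case: (ltnP i.+1 k) => h; first exact: r.
have := q i jj (_ : i.+1 = k); have := tab_lower i jj t; have := ltn_ord i.
move=> *; apply/eqP; rewrite eqn_leq; apply/andP; split; nlia.
Qed.

Lemma Emx_kk : Emx n k l k k = bbar k l.
Proof.
apply/matrixP => i jj; rewrite !mxE /efun; have := ltn_ord i.
case: (ltnP i.+1 k) => // h1; case: eqP => //; nlia.
Qed.

Lemma shift_P (A : 'M[nat]_(k, l)) p : 0 < p -> p < k -> k <= n ->
  (Pset n (p + 1) (p + 1 + kp n k) A <-> Pset n p p A).
Proof.
move=> p1 pk kn; split.
  move=> [t r q]; split => //.
  - by move=> i jj h; apply: r; nlia.
  - by move=> i jj h; rewrite r; nlia.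
move=> [t r q]; split => //.
- move=> i jj h; case: (ltnP i.+1 p) => h2; first exact: r.
  have := q i jj (_ : i.+1 = p); have := tab_lower i jj t.
  move=> *; apply/eqP; rewrite eqn_leq; apply/andP; split; nlia.
- move=> i jj h; have := tab_upper i jj t; rewrite /kp; nlia.
Qed.

Lemma shift_E p : 0 < p -> p < k -> k <= n -> Emx n k l (p + 1) (p + 1 + kp n k) = Emx n k l p p.
Proof.
move=> p1 pk kn; apply/matrixP => i jj; rewrite !mxE /efun /kp.
case: (ltnP i.+1 p) => a1; case: (ltnP i.+1 (p + 1)) => a2;
  case: (i.+1 =P p) => a3; case: (i.+1 =P p + 1) => a4; nlia.
Qed.

End Bounds.
Lemma idx n k a g r : 0 < kp n k -> a.-1 = g * kp n k + r -> r < kp n k ->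
  gidx n k a = g /\ ridx n k a = r.
Proof.
move=> kp0 e rl.
have eg : gidx n k a = g by rewrite /gidx e divnMDl // divn_small // addn0.
split => //; rewrite /ridx eg e; nlia.
Qed.

Lemma main_ind n k l : 1 <= n -> 1 <= k <= n -> 1 <= l ->
  forall a, 1 <= a <= k * kp n k -> forall g r, a.-1 = g * kp n k + r -> r < kp n k ->
  (forall A : 'M[nat]_(k, l), Bset n a A <-> Pset n (k - g) (k - g + r + 1) A) /\
  bseq_a n k l a = Emx n k l (k - g) (k - g + r + 1).
Proof.
move=> n1 /andP [k1 kn] l1.
have kp0 : 0 < kp n k by rewrite /kp; nlia.
elim=> [|a' IH] // /andP [_ ale] g r ea rl.
have [eg er] := idx kp0 ea rl.
have ei : iidx n k a'.+1 = k - g + r by rewrite /iidx eg er.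
have gk : g < k.
  move: ale ea; rewrite /= => ale ea.
  have : g * kp n k < k * kp n k by nlia.
  by rewrite ltn_pmul2r.
set p := k - g.
set j := p + r.
have prev : (forall A0 : 'M[nat]_(k, l), Bset n a' A0 <-> Pset n p j A0) /\
            bseq_a n k l a' = Emx n k l p j.
  clear eg er; case: a' IH ale ea ei => [|a'] IH ale ea ei.
    have r0 : r = 0 by move: ea => /= ea; nlia.
    have g0 : g = 0.
      move: ea; rewrite /= r0 addn0 => /esym /eqP; rewrite muln_eq0 => /orP [/eqP //|/eqP h].
      by move: kp0; rewrite h.
    rewrite /j /p r0 g0 subn0 addn0; split; last by rewrite Emx_kk.
    by move=> A0; apply: bbar_P.
  case: (posnP r) => [r0|rpos].
    have g1 : 0 < g.
      move: ea; rewrite /= r0 addn0 => ea; case: g ea {ei gk p j} => // ea.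
    have ea1 : a'.+1 = g * kp n k by move: ea; rewrite /= r0 addn0.
    have ea' : a'.+1.-1 = g.-1 * kp n k + (kp n k).-1.
      rewrite /=; case: g g1 ea1 {ei gk p j ea} => // g' _; rewrite mulSn /=; nlia.
    have ha : 1 <= a'.+1 <= k * kp n k by apply/andP; split; nlia.
    have hr : (kp n k).-1 < kp n k by nlia.
    have [IH1 IH2] := IH ha _ _ ea' hr.
    have e1 : k - g.-1 = p + 1 by rewrite /p; nlia.
    have e2 : k - g.-1 + (kp n k).-1 + 1 = p + 1 + kp n k by rewrite /p; nlia.
    rewrite e2 e1 in IH1 IH2.
    have pp : 0 < p by rewrite /p; nlia.
    have pk : p < k by rewrite /p; nlia.
    rewrite /j r0 addn0; split; last by rewrite IH2 shift_E.
    by move=> A0; rewrite IH1 shift_P.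
  have ea' : a'.+1.-1 = g * kp n k + r.-1 by move: ea => /= ea; nlia.
  have ha : 1 <= a'.+1 <= k * kp n k by apply/andP; split; nlia.
  have hr : r.-1 < kp n k by nlia.
  have [IH1 IH2] := IH ha _ _ ea' hr.
  have e2 : k - g + r.-1 + 1 = j by rewrite /j /p; nlia.
  rewrite e2 in IH1 IH2; split => //.
have pp : 0 < p by rewrite /p; nlia.
have pk : p <= k by rewrite /p; nlia.
have pj : p <= j by rewrite /j; nlia.
have jn : j <= n by rewrite /j /p; move: rl; rewrite /kp; nlia.
have jp : j < p + (n.+1 - k) by rewrite /j; move: rl; rewrite /kp; nlia.
have ej : k - g + r + 1 = j.+1 by rewrite /j /p addn1.
rewrite ej; split.
  move=> A; split.
    move=> [m [A0 [H1 H2]]]; rewrite ei -/p -/j in H2.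
    have H1' : Bset n a' A0 := H1.
    exact: (step_fwd l1 pp pk pj jn (proj1 (proj1 prev A0) H1') H2).
  move=> H; have [m [A0 [H1 H2]]] := step_bwd l1 pp pk pj jn H.
  exists m, A0; split; first by apply/(proj1 prev).
  by rewrite ei.
change (odflt (bseq_a n k l a') (iterf (iidx n k a'.+1) (phi_tab (iidx n k a'.+1) (bseq_a n k l a')) (bseq_a n k l a')) = Emx n k l p j.+1).
rewrite ei -/p -/j (proj2 prev).
exact: step_b.
Qed.

Unset Implicit Arguments.
Theorem mainTheorem3 (n k l : nat) :
  1 <= n -> 1 <= k <= n -> 1 <= l ->
  forall a : nat, 1 <= a <= k * kp n k ->
  (forall A : 'M[nat]_(k, l),
     Bset n a A <->
     [/\ is_tab n A,
         (forall (i : 'I_k) (j : 'I_l), i.+1 < k - gidx n k a -> A i j = i.+1) &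
         (forall (i : 'I_k) (j : 'I_l), i.+1 = k - gidx n k a ->
            A i j <= k - gidx n k a + ridx n k a + 1)]) /\
  bseq_a n k l a = b_expected n k l a.
Proof.
move=> n1 kk l1 a ha.
have kp0 : 0 < kp n k by move/andP: kk => [_ kn]; rewrite /kp; nlia.
have de := divn_eq a.-1 (kp n k).
have md := ltn_pmod a.-1 kp0.
have ea : a.-1 = gidx n k a * kp n k + ridx n k a.
  rewrite /ridx /gidx; nlia.
have rl : ridx n k a < kp n k.
  rewrite /ridx /gidx; nlia.
have [H1 H2] := main_ind n1 kk l1 ha ea rl.
split; [exact: H1 | exact: H2].
Qed.
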